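(* Consider the instance described in the context with any realization of $X_1,\dots,X_m$. For any allocation $\widehat{\mathcal{A}}$, if there exists a constant $K>0$ such that $$d_H\big(X_{[1:m/2]},\widehat X_{[1:m/2]}\big)>\frac m4-\frac{K\gamma\sqrt m}{2\epsilon}\quad\text{and}\quad\Big|\tfrac12\big(|\widehat A_\epsilon|-|\widehat B_\epsilon|\big)+V_\gamma\Big|\ge K\gamma\sqrt m,$$ then $\mathrm{Envy}(\widehat{\mathcal{A}})>0$.
   Context: Two agents $a,b$, $m$ items ($m$ a multiple of 4), additive utilities. Instance: binary $X_1,\dots,X_m$; for $i\le m/2$: if $X_i=1$ then $\mu^a_i=\frac12+\epsilon,\mu^b_i=\frac12-\epsilon$, if $X_i=0$ then $\mu^a_i=\frac12-\epsilon,\mu^b_i=\frac12+\epsilon$; for $i>m/2$: if $X_i=1$ then $\mu^a_i=\mu^b_i=\frac12+\gamma$, if $X_i=0$ then $\mu^a_i=\mu^b_i=\frac12-\gamma$; $\epsilon,\gamma\in(0,1/2]$. For an allocation $\widehat{\mathcal{A}}=(\widehat{\mathcal{A}}_a,\widehat{\mathcal{A}}_b)$ (partition of $[m]$): $\mathrm{Envy}_{a\to b}=\sum_{i\in\widehat{\mathcal{A}}_b}\mu^a_i-\sum_{i\in\widehat{\mathcal{A}}_a}\mu^a_i$, $\mathrm{Envy}_{b\to a}=\sum_{i\in\widehat{\mathcal{A}}_a}\mu^b_i-\sum_{i\in\widehat{\mathcal{A}}_b}\mu^b_i$, $\mathrm{Envy}=\max$ of the two. $\widehat X_i=1$ if $i\in\widehat{\mathcal{A}}_a$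 and $\widehat X_i=0$ otherwise; $\widehat A_\epsilon=\{i\le m/2:\widehat X_i=1\}$, $\widehat B_\epsilon=\{i\le m/2:\widehat X_i=0\}$; $S_i=1$ if $i\in\widehat{\mathcal{A}}_a$ and $S_i=-1$ otherwise; $V_\gamma=\sum_{i>m/2}S_i\mu^a_i$. $d_H$ is Hamming distance and $X_{[1:m/2]}=(X_1,\dots,X_{m/2})$. *)

(* Defs.v *)
(* items are indexed by 'I_m (0-based: item i+1 of the paper is
   ordinal i), values in an abstract R : rcfType (real closed, has Num.sqrt). *)
From mathcomp Require Import all_boot all_order all_algebra.
Set Implicit Arguments. Unset Strict Implicit. Unset Printing Implicit Defensive.
Import Order.TTheory GRing.Theory Num.Theory.
Local Open Scope ring_scope.

Section Instance.
Variables (R : rcfType) (m : nat) (eps gam : R) (X : 'I_m -> bool).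

(* first half: paper index i <= m/2  <->  ordinal i < m/2 *)
Definition first_half (i : 'I_m) : bool := (i < m %/ 2)%N.

Definition mu_a (i : 'I_m) : R :=
  if first_half i then (if X i then 1/2 + eps else 1/2 - eps)
  else (if X i then 1/2 + gam else 1/2 - gam).

Definition mu_b (i : 'I_m) : R :=
  if first_half i then (if X i then 1/2 - eps else 1/2 + eps)
  else (if X i then 1/2 + gam else 1/2 - gam).

(* allocation: Aa is agent a's bundle, agent b gets the complement ~: Aa *)
Variable Aa : {set 'I_m}.

Definition envy_ab : R :=
  \sum_(i in ~: Aa) mu_a i - \sum_(i in Aa) mu_a i.
Definition envy_ba : R :=
  \sum_(i in Aa) mu_b i - \sum_(i in ~: Aa) mu_b i.
Definition envy : R := Num.max envy_ab envy_ba.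

Definition Xhat (i : 'I_m) : bool := i \in Aa.

Definition dH_half : nat := #|[set i : 'I_m | first_half i & X i != Xhat i]|.

Definition Ahat_eps : {set 'I_m} := [set i : 'I_m | first_half i & Xhat i].
Definition Bhat_eps : {set 'I_m} := [set i : 'I_m | first_half i & ~~ Xhat i].

Definition S (i : 'I_m) : R := if i \in Aa then 1 else -1.

Definition V_gam : R := \sum_(i : 'I_m | ~~ first_half i) S i * mu_a i.

End Instance.

(* Main.v *)
Require Import Defs.
From mathcomp Require Import all_boot all_order all_algebra.
From mathcomp Require Import ring lra.
Import Order.TTheory GRing.Theory Num.Theory.
Local Open Scope ring_scope.

Lemma card_first m : #|[set i : 'I_m | first_half i]| = (m %/ 2)%N.
Proof.
rewrite -sum1_card big_mkcond /=.
under eq_bigr => i _ do rewrite in_set /first_half.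
rewrite -(big_mkord xpredT (fun i => if (i < m %/ 2)%N then 1%N else 0%N)).

rewrite (@big_cat_nat _ _ _ (m %/ 2) 0 m _ _ (leq0n _) (leq_div _ _)) /=.
rewrite big_nat_cond (eq_bigr (fun _ => 1%N)); last by move=> i /andP[/andP[_ ->]].
rewrite -big_nat_cond sum_nat_const_nat subn0 muln1.
rewrite big_nat_cond big1 ?addn0 // => i /andP[/andP[h _] _].
by rewrite ltnNge h.
Qed.

Lemma cardR (R : rcfType) m (A : {set 'I_m}) :
  (#|A|%:R : R) = \sum_i (if i \in A then 1 else 0).
Proof. by rewrite -big_mkcond /= sumr_const. Qed.

Lemma envy_ab_E (R : rcfType) m eps gam (X : 'I_m -> bool) Aa :
  envy_ab eps gam X Aa =
  - ((1/2) * ((#|Ahat_eps Aa|)%:R - (#|Bhat_eps Aa|)%:R) + V_gam eps gam X Aa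
     + eps * ((#|[set i : 'I_m | first_half i]|)%:R - 2 * (dH_half X Aa)%:R) : R).
Proof.
rewrite /envy_ab /V_gam /dH_half !cardR (big_mkcond (fun i => i \in ~: Aa))
  (big_mkcond (fun i => i \in Aa)) (big_mkcond (fun i => ~~ first_half i)) /=.
rewrite -!sumrB !mulr_sumr -!sumrB !mulr_sumr -!big_split /= ?sumrN -?sumrB.
rewrite -sumrN. apply: eq_bigr => i _; rewrite in_setC !in_set /Xhat /S /mu_a.
case: (first_half i); case: (X i); case: (i \in Aa) => /=; ring.
Qed.

Lemma envy_ba_E (R : rcfType) m eps gam (X : 'I_m -> bool) Aa :
  envy_ba eps gam X Aa =
  ((1/2) * ((#|Ahat_eps Aa|)%:R - (#|Bhat_eps Aa|)%:R) + V_gam eps gam X Aa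
     - eps * ((#|[set i : 'I_m | first_half i]|)%:R - 2 * (dH_half X Aa)%:R) : R).
Proof.
rewrite /envy_ba /V_gam /dH_half !cardR (big_mkcond (fun i => i \in ~: Aa))
  (big_mkcond (fun i => i \in Aa)) (big_mkcond (fun i => ~~ first_half i)) /=.
rewrite -!sumrB !mulr_sumr -!sumrB !mulr_sumr -big_split -sumrB /=.
apply: eq_bigr => i _; rewrite in_setC !in_set /Xhat /S /mu_a /mu_b.
case: (first_half i); case: (X i); case: (i \in Aa) => /=; ring.
Qed.

Theorem lemma23 (R : rcfType) (m : nat) (eps gam : R) (X : 'I_m -> bool)
    (Aa : {set 'I_m}) (K : R) :
  (4 %| m)%N ->
  0 < eps -> eps <= 1/2 -> 0 < gam -> gam <= 1/2 ->
  0 < K ->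
  (dH_half X Aa)%:R > m%:R / 4 - K * gam * Num.sqrt (m%:R) / (2 * eps) ->
  `| (1/2) * ((#|Ahat_eps Aa|)%:R - (#|Bhat_eps Aa|)%:R) + V_gam eps gam X Aa |
    >= K * gam * Num.sqrt (m%:R) ->
  envy eps gam X Aa > 0.
Proof.
move=> h4 he _ _ _ _ hd habs.
rewrite /envy ltNge ge_max envy_ab_E envy_ba_E card_first.
set c := K * gam * _ in hd habs.
set D := (_ + V_gam _ _ _ _) in habs *.
set d := (dH_half X Aa)%:R in hd *.
have hm2 : ((m %/ 2)%N%:R : R) = m%:R / 2.
  have h2 : (2 %| m)%N by apply: (dvdn_trans _ h4).
  by rewrite -{2}(divnK h2) natrM mulfK // pnatr_eq0.
rewrite hm2.
set q := c / (2 * eps) in hd.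
have hc : c = 2 * eps * q by rewrite /q mulrC divfK // mulf_neq0 // gt_eqF.
have hT : eps * (m%:R / 2 - 2 * d) < c.
  have hh : 0 < d - (m%:R/4 - q) by rewrite subr_gt0.
  rewrite hc; have := mulr_gt0 he hh; nra.
apply/negP => /andP[h1 h2].
have : `|D| <= eps * (m%:R / 2 - 2 * d).
  rewrite ler_norml; apply/andP; split; lra.
lra.
Qed.
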